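(* Let $n\geq1$ and $\sigma\in\mathfrak{S}_n$. For every packed word $f$ with $\mathrm{Std}(f)=\sigma$ one has $M(f)\subseteq M(\sigma)$, and the map $$\phi_\sigma:\{f\text{ packed word}\mid\mathrm{Std}(f)=\sigma\}\longrightarrow\{I\mid I\subseteq M(\sigma)\},\qquad f\longmapsto M(f),$$ is bijective.
   Context: $[n]=\{1,\ldots,n\}$. A packed word of length $n$ is a word $f=f(1)\ldots f(n)$ of positive integers with $\{f(1),\ldots,f(n)\}=[\max f]$; $\mathfrak{S}_n$ is the set of permutations of $[n]$, viewed as packed words $\sigma(1)\ldots\sigma(n)$. The standardization $\mathrm{Std}(f)$ of a packed word $f$ of length $n$ is the unique $\sigma\in\mathfrak{S}_n$ such that for all $i,j$: $f(i)<f(j)\Rightarrow\sigma(i)<\sigma(j)$, and ($f(i)=f(j)$ and $i<j$) $\Rightarrow\sigma(i)<\sigma(j)$. For a packed word $f$ of length $n$, $M(f)$ is the set of $i\in[n]$ such that: $f(i)<\max f$; for all $j\in[n]$, $f(j)=f(i)\Rightarrow j\leq i$; and for all $j\in[n]$, $f(j)=f(i)+1\Rightarrow j>i$. *)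

(* Defs.v *)
From mathcomp Require Import all_boot.
Set Implicit Arguments. Unset Strict Implicit. Unset Printing Implicit Defensive.

(* Words of length n are finite functions 'I_n -> nat; position i : 'I_n
   stands for the paper's position i+1 in [n]. *)
Definition word (n : nat) := {ffun 'I_n -> nat}.

Definition wmax n (f : word n) : nat := \max_(i : 'I_n) f i.

Definition packed n (f : word n) : Prop :=
  forall k : nat, [exists i : 'I_n, f i == k] = (0 < k <= wmax f).

Definition is_perm_word n (s : word n) : Prop :=
  injective s /\ forall i : 'I_n, 0 < s i <= n.

(* Std(f) = s, via the defining property of the standardization *)
Definition is_std n (f s : word n) : Prop :=
  is_perm_word s /\
  (forall i j : 'I_n, f i < f j -> s i < s j) /\
  (forall i j : 'I_n, f i = f j -> i < j -> s i < s j).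

Definition Mset n (f : word n) : {set 'I_n} :=
  [set i : 'I_n | [&& f i < wmax f,
                     [forall j : 'I_n, (f j == f i) ==> (j <= i)] &
                     [forall j : 'I_n, (f j == (f i).+1) ==> (i < j)]]].

(* Main.v *)
Require Import Defs.
From mathcomp Require Import all_boot zify.
Set Implicit Arguments.
Lemma surj_s n (s : word n) : is_perm_word s ->
  forall k, 0 < k <= n -> exists i, s i = k.
Proof.
move=> [inj rng] k /andP[k0 kn].
have hb : forall i : 'I_n, (s i).-1 < n.
  by move=> i; case/andP: (rng i) => a b; rewrite prednK.
pose t (i : 'I_n) : 'I_n := Ordinal (hb i).
have tinj : injective t.
  move=> i j /(congr1 val) /= h; apply: inj.
  by rewrite -(prednK (proj1 (andP (rng i)))) -(prednK (proj1 (andP (rng j)))) h.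
have kb : k.-1 < n by rewrite prednK.
have := injF_onto tinj (Ordinal kb).
case/codomP => i /(congr1 val) /= h; exists i.
by rewrite -(prednK (proj1 (andP (rng i)))) -h prednK.
Qed.

Section L.
Variables (n : nat) (s f : word n).
Hypotheses (ps : is_perm_word s) (pf : packed f) (sf : is_std f s).

Lemma mono i j : s i <= s j -> f i <= f j.
Proof. case: sf => _ [h1 _] => le; rewrite leqNgt; apply/negP => /h1; lia. Qed.

Lemma le_wmax i : f i <= wmax f.
Proof. rewrite /wmax. exact: leq_bigmax. Qed.

Lemma pos_f i : 0 < f i.
Proof. have := pf (f i); have -> : [exists k, f k == f i] by apply/existsP; exists i.
by move/esym/andP=> []. Qed.

Lemma attain v : 0 < v <= wmax f -> exists k, f k = v.
Proof. by rewrite -pf => /existsP[k /eqP]; exists k. Qed.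

Lemma stepA i j : s j = (s i).+1 -> f i <= f j <= (f i).+1.
Proof.
move=> e; apply/andP; split; first by apply: mono; rewrite e.
rewrite leqNgt; apply/negP => lt.
have [k fk] : exists k, f k = (f i).+1.
  apply: attain; apply/andP; split => //; apply: leq_trans (le_wmax j); lia.
case: sf => _ [h1 _].
have : s i < s k by apply: h1; lia.
move=> h; have : s j <= s k by rewrite e.
move/mono; lia.
Qed.

Lemma stepB i j : s j = (s i).+1 -> f j = f i -> i < j.
Proof.
move=> e fe; case: sf => _ [_ h2]; rewrite ltnNge leq_eqVlt; apply/negP => /orP[/eqP/val_inj ji|ji].
  by move: e; rewrite ji; lia.
by have := h2 _ _ fe ji; lia.
Qed.

Lemma stepC i j : s j = (s i).+1 ->
  (i \in Mset f) = (f j == (f i).+1) && (i < j).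
Proof.
move=> e; case: sf => _ [h1 h2].
rewrite inE; apply/idP/idP.
  case/and3P => lt /forallP A /forallP B.
  have fj : f j = (f i).+1.
    have /andP[a b] := @stepA i j e.
    case: (ltngtP (f j) (f i)) => // c; first lia.
      by lia.
    have := A j; rewrite c eqxx /= => ji.
    have := @stepB i j e c; lia.
  by rewrite fj eqxx /=; have := B j; rewrite fj eqxx.
case/andP => /eqP fj ij; apply/and3P; split.
- by apply: leq_trans (le_wmax j); rewrite fj.
- apply/forallP => k; apply/implyP => /eqP fk; rewrite leqNgt; apply/negP => ik.
  have := h2 _ _ (esym fk) ik => h; have : s j <= s k by rewrite e.
  move/mono; lia.
- apply/forallP => k; apply/implyP => /eqP fk; rewrite ltnNge; apply/negP => ki.
  have kj : k < j by lia.
  have kj' : f k = f j by rewrite fj.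
  have := h2 _ _ kj' kj; rewrite e ltnS; move/mono; lia.
Qed.

Lemma stepD i : (forall k, s k <= s i) -> i \notin Mset f.
Proof.
move=> mx; rewrite inE negb_and -leqNgt; apply/orP; left.
by apply/bigmax_leqP => k _; apply: mono.
Qed.

Lemma stepE i : s i = 1 -> (forall k, 0 < s k) -> f i = 1.
Proof.
move=> e sp; have [k fk] : exists k, f k = 1.
  apply: attain; have := pos_f i; have := le_wmax i; lia.
have := pos_f i; have : f i <= f k by apply: mono; rewrite e sp.
lia.
Qed.

Lemma stepK i j : s j = (s i).+1 -> f j = f i + ((i \in Mset f) || (j < i)).
Proof.
move=> e; rewrite (@stepC i j e); have /andP[a b] := @stepA i j e.
case: (ltngtP i j) => ij.
- rewrite andbT orbF. case: eqP => //; first lia.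
  move=> ne; have: f j = f i by lia. by move=> ->; rewrite addn0.
- rewrite andbF /=. case: (f j =P f i) => c; first by have := @stepB i j e c; lia.
  lia.
- by move/val_inj: ij e => ->; lia.
Qed.
End L.

Lemma packed_from n (s f : word n) : 1 <= n -> is_perm_word s ->
  (forall i, s i = 1 -> f i = 1) ->
  (forall i j, s i <= s j -> f i <= f j) ->
  (forall i j, s j = (s i).+1 -> f j <= (f i).+1) -> packed f.
Proof.
move=> n1 ps base mn st.
have sr := surj_s ps; have [_ rng] := ps.
have reach : forall d i, s i = d.+1 -> forall v, 0 < v <= f i -> exists k, f k = v.
  elim=> [|d IH] i e v hv.
    by exists i; move: hv; rewrite base //; lia.
  have [i0 e0] : exists i0, s i0 = d.+1.
    apply: sr; have := rng i; lia.
  have := st i0 i; rewrite e e0 => /(_ erefl) h.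
  case: (leqP v (f i0)) => c.
    apply: (IH i0 e0); lia.
  by exists i; lia.
have [t et] : exists t, s t = n by apply: sr; lia.
have wm : wmax f = f t.
  apply/eqP; rewrite eqn_leq le_wmax andbT.
  apply/bigmax_leqP => k _; apply: mn; rewrite et; have := rng k; lia.
have [b eb] : exists b, s b = 1 by apply: sr; lia.
move=> k; apply/idP/idP.
  case/existsP => i /eqP <-; rewrite wm; apply/andP; split.
    apply: leq_trans (mn b i _); first by rewrite base.
    by rewrite eb; have := rng i; lia.
  by apply: mn; rewrite et; have := rng i; lia.
rewrite wm => hk; have et' : s t = n.-1.+1 by rewrite prednK.
have [k' fk] := reach _ t et' k hk.
by apply/existsP; exists k'; rewrite fk.
Qed.

Definition brk n (s : word n) (I : {set 'I_n}) (j : 'I_n) : bool :=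
  (j \in I) || [exists j', (s j' == (s j).+1) && (j' < j)].

Definition fI n (s : word n) (I : {set 'I_n}) : word n :=
  [ffun i => #|[set j | (s j < s i) && brk s I j]|.+1].

Section C.
Variables (n : nat) (s : word n) (I : {set 'I_n}).
Hypotheses (n1 : 1 <= n) (ps : is_perm_word s).

Lemma fI_mono i j : s i <= s j -> fI s I i <= fI s I j.
Proof.
move=> h; rewrite !ffunE ltnS; apply: subset_leq_card.
apply/subsetP => k; rewrite !inE => /andP[a b]; rewrite b andbT.
exact: leq_trans a h.
Qed.

Lemma fI_step i j : s j = (s i).+1 -> fI s I j = fI s I i + brk s I i.
Proof.
move=> e; have [inj _] := ps; rewrite !ffunE.
have -> : [set k | (s k < s j) && brk s I k] =
   [set k | (s k < s i) && brk s I k] :|: (if brk s I i then [set i] else set0).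
  apply/setP => k; rewrite !inE e ltnS leq_eqVlt.
  case: (s k =P s i) => [/inj -> | ne] /=.
    by case: (brk s I i); rewrite ?inE ?eqxx ?ltnn.
  have kni : (k == i) = false by apply/eqP => ki; apply: ne; rewrite ki.
  by case: (brk s I i); rewrite ?inE ?kni ?orbF.
case: (brk s I i); last by rewrite setU0 addn0.
by rewrite setUC cardsU1 inE ltnn /= add1n addn1.
Qed.

Lemma fI_base i : s i = 1 -> fI s I i = 1.
Proof.
move=> e; have [_ rng] := ps; rewrite ffunE.
suff -> : [set j | (s j < s i) && brk s I j] = set0 by rewrite cards0.
apply/setP => k; rewrite !inE e; have := rng k; case: (s k) => //.
Qed.

Lemma fI_packed : packed (fI s I).
Proof.
apply: (@packed_from n s (fI s I) n1 ps); [exact: fI_base | exact: fI_mono |].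
by move=> i j /fI_step ->; case: brk; rewrite ?addn1 ?addn0.
Qed.

Lemma fI_std : is_std (fI s I) s.
Proof.
have [inj rng] := ps; have sr := surj_s ps.
split => //; split.
  move=> i j h; rewrite ltnNge; apply/negP => /fI_mono; lia.
move=> i j fe ij.
case: (ltngtP (s i) (s j)) => // c; last first.
  by move: ij; rewrite (inj _ _ c) ltnn.
exfalso.
have nb : forall k, s j <= s k < s i -> brk s I k = false.
  move=> k /andP[a b].
  have sub : [set x | (s x < s j) && brk s I x] \subset [set x | (s x < s i) && brk s I x].
    apply/subsetP => x; rewrite !inE => /andP[x1 ->]; rewrite andbT; exact: ltn_trans x1 c.
  have := subset_leqif_card sub; move: fe; rewrite !ffunE => /eqP; rewrite eqSS => /eqP ->.
  case => _ /esym; rewrite eqxx => /subsetP /(_ k).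
  rewrite !inE b /=; case: (brk s I k) => //; move/(_ isT); lia.
have walk : forall d, s j + d <= s i -> exists k, s k = s j + d /\ j <= k.
  elim=> [|d IH] h; first by exists j; rewrite addn0.
  rewrite addnS in h; have [k [ek jk]] := IH (ltnW h).
  have [k' ek'] : exists k', s k' = (s k).+1.
    apply: sr; have := rng i; lia.
  exists k'; split; first by rewrite ek' ek addnS.
  have hh : s j <= s j + d < s i by lia.
  have := nb k; rewrite ek => /(_ hh) /negbT; rewrite negb_or => /andP[_ /existsPn /(_ k')].
  rewrite ek' ek eqxx /= -leqNgt => kk; exact: leq_trans jk kk.
have [k [ek jk]] : exists k, s k = s j + (s i - s j) /\ j <= k by apply: walk; lia.
have : k = i by apply: inj; rewrite ek; lia.
move=> ki; move: jk; rewrite ki; lia.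
Qed.
End C.

Theorem lemma25 (n : nat) (s : word n) :
  1 <= n -> is_perm_word s ->
  (forall f : word n, packed f -> is_std f s -> Mset f \subset Mset s) /\
  (forall f g : word n, packed f -> is_std f s -> packed g -> is_std g s ->
      Mset f = Mset g -> f = g) /\
  (forall I : {set 'I_n}, I \subset Mset s ->
      exists f : word n, [/\ packed f, is_std f s & Mset f = I]).
Proof.
move=> n1 ps; have sr := surj_s ps; have [inj rng] := ps.
have pss : packed s.
  apply: (@packed_from n s s n1 ps) => // i j ->; exact: leqnn.
have sss : is_std s s.
  split => //; split => // i j; move/inj ->; by rewrite ltnn.
have topM : forall (f : word n), packed f -> is_std f s ->
    forall i, s i = n -> i \notin Mset f.
  move=> f pf sf x ex; apply: (stepD sf x) => k; rewrite ex; have := rng k; lia.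
split.
  move=> f pf sf; apply/subsetP => i iM.
  case: (ltngtP (s i) n) => c; last by move: iM; rewrite (negbTE (topM f pf sf i c)).
    have [j ej] : exists j, s j = (s i).+1 by apply: sr; lia.
    move: iM; rewrite (stepC pf sf _ _ ej) (stepC pss sss _ _ ej) ej eqxx /=.
    by case/andP.
  by have := rng i; lia.
split.
  move=> f g pf sf pg sg eM; apply/ffunP => i.
  suff H : forall d i, s i = d.+1 -> f i = g i.
    by apply: (H (s i).-1); rewrite prednK //; have := rng i; lia.
  clear i; elim=> [|d IH] i e.
    rewrite (stepE pf sf _ e) ?(stepE pg sg _ e) //; move=> k; have := rng k; lia.
  have [i0 e0] : exists i0, s i0 = d.+1 by apply: sr; have := rng i; lia.
  have e' : s i = (s i0).+1 by rewrite e e0.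
  by rewrite (stepK pf sf _ _ e') (stepK pg sg _ _ e') eM (IH _ e0).
move=> I IM; exists (fI s I).
have pf := fI_packed I n1 ps; have sf := fI_std I n1 ps.
split => //; apply/setP => i.
case: (ltngtP (s i) n) => c; last first.
  rewrite (negbTE (topM _ pf sf i c)); apply/esym/negP => iI.
  by have := topM s pss sss i c; rewrite (subsetP IM _ iI).
  by have := rng i; lia.
have [j ej] : exists j, s j = (s i).+1 by apply: sr; lia.
rewrite (stepC pf sf _ _ ej) (fI_step I ps _ _ ej) /brk.
case iI: (i \in I) => /=.
  have := subsetP IM _ iI; rewrite (stepC pss sss _ _ ej) => /andP[_ ->].
  by rewrite addn1 eqxx.
case: existsP => [[j' /andP[/eqP ej' ji]]|_].
  have jj : j' = j by apply: inj; rewrite ej ej'.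
  rewrite jj in ji; rewrite addn1 eqxx /=; lia.
by rewrite addn0; lia.
Qed.
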